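(* Let $\Gamma_1,\Gamma_2$ be co-prime integers with $1<\Gamma_1<\Gamma_2$, with Euclidean sequence $\sigma_{-1},\sigma_0,\dots,\sigma_{K+1}$ and numbers $\ddot n_{2,j},\ddot n_{1,j}$ ($1\le j\le K+1$) as defined in the context. Then: If $K=0$: $\ddot n_{2,1}=\Gamma_1-1$ and $\ddot n_{1,1}=\Gamma_2-1$. If $K\ge1$: $\ddot n_{2,K+1}=\Gamma_1-1$, $\ddot n_{1,K+1}=\Gamma_2-1$, and for $1\le j\le K$: $$\ddot n_{2,j}=\begin{cases}\lfloor\Gamma_1/\sigma_1\rfloor & j=1,\\ \lfloor\Gamma_1/\sigma_1\rfloor\lfloor\sigma_1/\sigma_2\rfloor & j=2,\\ \lfloor\sigma_{2p}/\sigma_{2p+1}\rfloor(\ddot n_{2,2p}+1)+\ddot n_{2,2p-1} & j=2p+1,\ p\ge1,\\ \lfloor\sigma_{2p+1}/\sigma_{2p+2}\rfloor\ddot n_{2,2p+1}+\ddot n_{2,2p} & j=2p+2,\ p\ge1,\end{cases}$$ $$\ddot n_{1,j}=\begin{cases}\lfloor\Gamma_2/\Gamma_1\rfloor\lfloor\Gamma_1/\sigma_1\rfloor & j=1,\\ \lfloor\Gamma_2/\Gamma_1\rfloor\lfloor\Gamma_1/\sigma_1\rfloor\lfloor\sigma_1/\sigma_2\rfloor+\lfloor\sigma_1/\sigma_2\rfloor+\lfloor\Gamma_2/\Gamma_1\rfloor & j=2,\\ \lfloor\sigma_{2p}/\sigma_{2p+1}\rfloor\ddot n_{1,2p}+\ddot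 n_{1,2p-1} & j=2p+1,\ p\ge1,\\ \lfloor\sigma_{2p+1}/\sigma_{2p+2}\rfloor(\ddot n_{1,2p+1}+1)+\ddot n_{1,2p} & j=2p+2,\ p\ge1.\end{cases}$$
   Context: $|a|_b$ is the remainder of the integer $a$ modulo the positive integer $b$. Euclidean sequence: $\sigma_{-1}=\Gamma_2$, $\sigma_0=\Gamma_1$, $\sigma_i=|\sigma_{i-2}|_{\sigma_{i-1}}$ for $i\ge1$; $K\ge0$ is the (existing, unique) index with $\sigma_K>1$ and $\sigma_{K+1}=1$. For $1\le n<\Gamma_1$ let $S_{2,n}=\{|t\Gamma_2|_{\Gamma_1}: t=0,1,\dots,n\}$ and let $d_{2,n}$ be the minimum distance between two distinct elements of $S_{2,n}$; for $1\le n<\Gamma_2$ let $S_{1,n}=\{|t\Gamma_1|_{\Gamma_2}: t=0,1,\dots,n\}$ and $d_{1,n}$ the minimum distance between two distinct elements of $S_{1,n}$. For $1\le j\le K+1$ define $\ddot n_{2,j}=\max\{n: 1\le n<\Gamma_1,\ d_{2,n}\ge\sigma_j\}$ and $\ddot n_{1,j}=\max\{n:1\le n<\Gamma_2,\ d_{1,n}\ge\sigma_j\}$. *)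

(* Defs.v *)
From mathcomp Require Import all_boot.
Set Implicit Arguments. Unset Strict Implicit. Unset Printing Implicit Defensive.

(* Euclidean sequence: sigpair g1 g2 i = (sigma_{i-1}, sigma_i), starting from
   (sigma_{-1}, sigma_0) = (g2, g1), and sigma_i = sigma_{i-2} mod sigma_{i-1}. *)
Fixpoint sigpair (g1 g2 : nat) (i : nat) : nat * nat :=
  match i with
  | 0 => (g2, g1)
  | i'.+1 => let: (a, b) := sigpair g1 g2 i' in (b, a %% b)
  end.

Definition sigma (g1 g2 i : nat) : nat := (sigpair g1 g2 i).2.

Definition ndist (x y : nat) : nat := (x - y) + (y - x).

(* minimum distance between two distinct elements of s
   (only used when s has at least two distinct elements) *)
Definition mindist (s : seq nat) : nat :=
  let D := [seq ndist x y | x <- s, y <- [seq y <- s | y != x]] in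
  foldr minn (head 0 D) D.

Definition Sset (a b n : nat) : seq nat := [seq (t * a) %% b | t <- iota 0 n.+1].

Definition d2 (g1 g2 n : nat) : nat := mindist (Sset g2 g1 n).
Definition d1 (g1 g2 n : nat) : nat := mindist (Sset g1 g2 n).

Definition ndd2 (g1 g2 j : nat) : nat :=
  \max_(1 <= n < g1 | sigma g1 g2 j <= d2 g1 g2 n) n.
Definition ndd1 (g1 g2 j : nat) : nat :=
  \max_(1 <= n < g2 | sigma g1 g2 j <= d1 g1 g2 n) n.

(* Main.v *)
Require Import Defs.
From mathcomp Require Import all_boot.
From mathcomp Require Import zify.
From Stdlib Require Import ZArith Lia.

Definition u (a b i : nat) : nat := (sigpair a b i).1.

Lemma u0 a b : u a b 0 = b. Proof. by []. Qed.
Lemma u1 a b : u a b 1 = a. Proof. by []. Qed.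
Lemma sigma_u a b i : sigma a b i = u a b i.+1.
Proof. rewrite /sigma /u /=; by case: (sigpair a b i). Qed.
Lemma uSS a b i : u a b i.+2 = u a b i %% u a b i.+1.
Proof. rewrite /u /=; by case: (sigpair a b i). Qed.

Lemma sigpair_shift g1 g2 i : sigpair (g2 %% g1) g1 i = sigpair g1 g2 i.+1.
Proof. elim: i => [|i IH] //=. by rewrite IH. Qed.

Lemma u_shift g1 g2 i : u (g2 %% g1) g1 i = sigma g1 g2 i.
Proof. by rewrite /u sigpair_shift /sigma /=; case: (sigpair g1 g2 i). Qed.

Definition Q a b i := u a b i %/ u a b i.+1.

Fixpoint CE (a b i : nat) : nat * nat * nat * nat :=
  match i with
  | 0 => (0, 1, 1, 0)
  | i'.+1 => let: (c0, e0, c1, e1) := CE a b i' in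
             (c1, e1, c0 + Q a b i' * c1, e0 + Q a b i' * e1)
  end.
Definition C a b i := (CE a b i).1.1.1.
Definition E a b i := (CE a b i).1.1.2.

Arguments C : simpl never.
Arguments E : simpl never.
Arguments Q : simpl never.

Lemma C0 a b : C a b 0 = 0. Proof. by []. Qed.
Lemma C1 a b : C a b 1 = 1. Proof. by []. Qed.
Lemma E0 a b : E a b 0 = 1. Proof. by []. Qed.
Lemma E1 a b : E a b 1 = 0. Proof. by []. Qed.
Lemma CSS a b i : C a b i.+2 = C a b i + Q a b i * C a b i.+1.
Proof. rewrite /C /=; by case: (CE a b i) => [[[? ?] ?] ?]. Qed.
Lemma ESS a b i : E a b i.+2 = E a b i + Q a b i * E a b i.+1.
Proof. rewrite /E /C /=; by case: (CE a b i) => [[[? ?] ?] ?]. Qed.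

Section Seq.
Variables a b : nat.
Hypothesis a0 : 0 < a.
Hypothesis ab : a < b.
Hypothesis cop : coprime a b.
Local Notation u := (u a b).
Local Notation C := (C a b).
Local Notation E := (E a b).
Local Notation Q := (Q a b).

Lemma udiv i : u i = Q i * u i.+1 + u i.+2.
Proof. rewrite uSS /Q; exact: divn_eq. Qed.

Lemma ugcd i : gcdn (u i) (u i.+1) = 1.
Proof.
elim: i => [|i IH]; first by rewrite u0 u1 gcdnC; apply/eqP.
by rewrite uSS gcdn_modr gcdnC.
Qed.

Lemma ule1 i : u i <= 1 -> u i.+1 <= 1.
Proof.
move=> H. case: i H => [|i] H; first by rewrite u0 in H; lia.
rewrite uSS. have := ugcd i. case: (u i.+1) H => [|[|n]] //= _.
- by rewrite gcdn0 modn0 => ->.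
- by rewrite modn1.
Qed.

Lemma ugt1 i j : i <= j -> 1 < u j -> 1 < u i.
Proof.
move=> + H; elim: j H => [|j IH] H; first by rewrite leqn0 => /eqP ->.
rewrite leq_eqVlt => /orP [/eqP -> //|]. rewrite ltnS; apply IH.
case: (leqP (u j) 1) => // /ule1; lia.
Qed.

Lemma udecr i : 0 < u i.+1 -> u i.+2 < u i.+1.
Proof. by move=> H; rewrite uSS ltn_pmod. Qed.

Lemma key i : (if odd i then C i * a = E i * b + u i else E i * b = C i * a + u i) /\
   (if odd i.+1 then C i.+1 * a = E i.+1 * b + u i.+1 else E i.+1 * b = C i.+1 * a + u i.+1).
Proof.
elim: i => [|i [IH1 IH2]]; first by rewrite /= u0 u1 C0 C1 E0 E1; lia.
split => //. rewrite CSS ESS.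
have hd := udiv i.
move: IH1 IH2 => /=. case: (odd i) => /= H1 H2.
- have H3 := congr1 (muln (Q i)) H2. nia.
- have H3 := congr1 (muln (Q i)) H2. nia.
Qed.

Lemma det i : if odd i then C i * E i.+1 = C i.+1 * E i + 1
              else C i.+1 * E i = C i * E i.+1 + 1.
Proof.
elim: i => [|i IH]; first by rewrite C0 C1 E0 E1.
rewrite CSS ESS /=. move: IH. case: (odd i) => /= H; nia.
Qed.

Lemma bezout i : u i * C i.+1 + u i.+1 * C i = b.
Proof.
elim: i => [|i IH]; first by rewrite u0 C1 C0; lia.
rewrite CSS. have hd := udiv i. nia.
Qed.

Lemma Cpos n : 0 < n -> 0 < C n.
Proof.
have H: forall i, (0 < C i.+1) /\ (0 < C i.+2).
  elim => [|i [H1 H2]]; first by rewrite C1 CSS C0 C1 /Q u0 u1; split => //; rewrite add0n muln1 divn_gt0 // ltnW.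
  split => //; rewrite CSS; lia.
case: n => [|n] // _. by case: (H n).
Qed.

End Seq.

Section BAs. Local Open Scope Z_scope.
Lemma BA (a b ci ci1 ei ei1 ui ui1 k m : Z):
  (ci*a - ei*b = ui /\ ci1*a - ei1*b = -ui1) \/ (ci*a - ei*b = -ui /\ ci1*a - ei1*b = ui1) ->
  0 <= ui -> 0 <= ui1 ->
  (ci1*ei - ci*ei1 = 1 \/ ci1*ei - ci*ei1 = -1) ->
  1 <= ci -> 1 <= ci1 -> 0 < k <= ci1 -> ~ (k = ci1 /\ m = ei1) ->
  ui <= k*a - m*b \/ ui <= m*b - k*a.
Proof.
intros HW Hu Hu1 HD Hc Hc1 Hk Hne.
assert (Hab: exists al be, k = al*ci+be*ci1 /\ m = al*ei+be*ei1).
{ destruct HD as [HD|HD].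
  - exists (-(k*ei1 - m*ci1)), (-(ci*m - ei*k)). split.
    + transitivity (k*(ci1*ei-ci*ei1)); [rewrite HD; ring | ring].
    + transitivity (m*(ci1*ei-ci*ei1)); [rewrite HD; ring | ring].
  - exists (k*ei1 - m*ci1), (ci*m - ei*k). split.
    + transitivity (-k*(ci1*ei-ci*ei1)); [rewrite HD; ring | ring].
    + transitivity (-m*(ci1*ei-ci*ei1)); [rewrite HD; ring | ring]. }
destruct Hab as [al [be [H1 H2]]].
assert (Hv: k*a - m*b = al*(ci*a - ei*b) + be*(ci1*a - ei1*b)) by (subst; ring).
assert (Hal: al <> 0).
{ intro. subst al. assert (be = 1) by nia. subst. apply Hne; split; ring. }
assert (Hs: al*be <= 0).
{ destruct (Z_le_gt_dec al 0); destruct (Z_le_gt_dec be 0); nia. }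
rewrite Hv.
destruct HW as [[W1 W2]|[W1 W2]]; rewrite W1 W2;
destruct (Z_le_gt_dec al 0); destruct (Z_le_gt_dec be 0); nia.
Qed.
End BAs.
Lemma foldr_min_le h D d : d \in D -> foldr minn h D <= d.
Proof.
elim: D => [|y D IH] //=; rewrite in_cons => /orP [/eqP ->|/IH]; lia.
Qed.
Lemma foldr_min_ge L h D : L <= h -> (forall d, d \in D -> L <= d) -> L <= foldr minn h D.
Proof.
move=> Hh; elim: D => [|y D IH] //= H.
have Hy := H y (mem_head _ _).
have : L <= foldr minn h D by apply IH => d Hd; apply H; rewrite in_cons Hd orbT.
lia.
Qed.

Definition Dl (s : seq nat) := [seq ndist x y | x <- s, y <- [seq y <- s | y != x]].

Lemma mindist_le s x y : x \in s -> y \in s -> y != x -> mindist s <= ndist x y.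
Proof.
move=> Hx Hy Hne. rewrite /mindist. apply: foldr_min_le.
apply/allpairsPdep. exists x, y; split => //. by rewrite mem_filter Hne.
Qed.

Lemma mindist_ge s L x0 y0 : x0 \in s -> y0 \in s -> y0 != x0 ->
  (forall x y, x \in s -> y \in s -> y != x -> L <= ndist x y) -> L <= mindist s.
Proof.
move=> Hx0 Hy0 Hne H. rewrite /mindist.
have HD : forall d, d \in Dl s -> L <= d.
  move=> d /allpairsPdep [x [y [Hx Hy ->]]]. move: Hy; rewrite mem_filter => /andP [Hne' Hy].
  exact: H.
apply: foldr_min_ge => //. apply: HD.
have : ndist x0 y0 \in Dl s.
  apply/allpairsPdep. exists x0, y0; split => //. by rewrite mem_filter Hne.
rewrite -/(Dl s). case: (Dl s) => //= d D _. by rewrite mem_head.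
Qed.

Lemma mem_Sset a b n x : (x \in Sset a b n) = [exists t : 'I_n.+1, x == t * a %% b].
Proof.
apply/idP/idP.
- move=> /mapP [t]; rewrite mem_iota add0n => /andP [_ Ht] ->.
  apply/existsP; exists (Ordinal Ht); by [].
- move=> /existsP [t /eqP ->]. apply/mapP; exists (nat_of_ord t) => //.
  by rewrite mem_iota add0n ltn_ord.
Qed.

Lemma max_eq b N (P : pred nat) : N < b -> (forall n, 1 <= n < b -> P n = (n <= N)) ->
  \max_(1 <= n < b | P n) n = N.
Proof.
move=> HN HP. apply/eqP; rewrite eqn_leq; apply/andP; split.
- apply/bigmax_leqP_seq => n; rewrite mem_index_iota => Hn Pn. by rewrite -(HP n Hn).
- case: N HN HP => [|N] // HN HP. apply: (leq_bigmax_seq N.+1).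
  + by rewrite mem_index_iota HN.
  + by rewrite HP // HN.
Qed.
Section Main.
Variables a b : nat.
Hypothesis a0 : 0 < a.
Hypothesis ab : a < b.
Hypothesis cop : coprime a b.
Local Notation u := (u a b).
Local Notation C := (C a b).
Local Notation E := (E a b).
Local Notation x t := (t * a %% b).

Lemma ule_a i : 1 < u i -> forall k, 0 < k <= i -> u k <= a.
Proof.
move=> Hi; elim=> [|k IH] //; case: k IH => [|k] IH Hk; first by rewrite u1.
have Hk1 : 1 < u k.+1 by apply: (@ugt1 a b a0 ab cop k.+1 i) => //; lia.
have := udecr a b k. have := IH ltac:(lia). lia.
Qed.

Lemma x0 : x 0 = 0. Proof. by rewrite mul0n mod0n. Qed.
Lemma x1 : x 1 = a. Proof. by rewrite mul1n modn_small. Qed.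

Lemma main i : 0 < i -> 1 < u i ->
  \max_(1 <= n < b | u i <= mindist (Sset a b n)) n = C i.+1 - ~~ odd i.
Proof.
move=> i0 Hi.
have Hb := bezout a b a0 ab cop i.
have HC1 := Cpos a b a0 ab cop i.+1 isT.
have HC := Cpos a b a0 ab cop i i0.
have HN : C i.+1 < b by nia.
have Hg := ugcd a b cop i.
have Hu1 : 0 < u i.+1.
  case E0: (u i.+1) Hg => [|//]. rewrite gcdn0 => H; lia.
have Hlt : u i.+1 < u i.
  case: i i0 Hi Hu1 {Hb HN HC HC1 Hg} => [//|i] _ Hi Hu1. apply: udecr; lia.
have Hua : u i <= a by apply: (ule_a i Hi); lia.
have [K1 K2] := key a b a0 ab cop i. rewrite [odd i.+1]/= in K2.
have Hdet := det a b a0 ab cop i.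
apply: max_eq; first by lia.
move=> n Hn. apply/idP/idP.
-
  apply: contraTT; rewrite -ltnNge => Hn2. rewrite -ltnNge.
  case Ho: (odd i) K1 K2 Hn2 => /= K1 K2 Hn2.
  +
    have Heq : (C i.+1 + 1) * a = E i.+1 * b + (a - u i.+1) by lia.
    have Hxv : x (C i.+1 + 1) = a - u i.+1.
      by rewrite Heq modnMDl modn_small //; lia.
    apply: (@leq_ltn_trans (ndist a (a - u i.+1))); last by rewrite /ndist; lia.
    apply: mindist_le.
    * rewrite mem_Sset; apply/existsP; exists (Ordinal (n:=n.+1) (m:=1) ltac:(lia)).
      by rewrite /= x1.
    * rewrite mem_Sset; apply/existsP; exists (Ordinal (n:=n.+1) (m:=C i.+1 + 1) ltac:(lia)).
      by rewrite /= Hxv.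
    * apply/eqP; lia.
  + have Heq : C i.+1 * a = E i.+1 * b + u i.+1 by lia.
    have Hxv : x (C i.+1) = u i.+1.
      by rewrite Heq modnMDl modn_small //; lia.
    apply: (@leq_ltn_trans (ndist 0 (u i.+1))); last by rewrite /ndist; lia.
    apply: mindist_le.
    * rewrite mem_Sset; apply/existsP; exists (Ordinal (n:=n.+1) (m:=0) ltac:(lia)).
      by rewrite /= x0.
    * rewrite mem_Sset; apply/existsP; exists (Ordinal (n:=n.+1) (m:=C i.+1) ltac:(lia)).
      by rewrite /= Hxv.
    * apply/eqP; lia.
- move=> Hn2.
  apply: (@mindist_ge _ _ 0 a).
  + rewrite mem_Sset; apply/existsP; exists (Ordinal (n:=n.+1) (m:=0) ltac:(lia)).
    by rewrite /= x0.
  + rewrite mem_Sset; apply/existsP; exists (Ordinal (n:=n.+1) (m:=1) ltac:(lia)).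
    by rewrite /= x1.
  + apply/eqP; lia.
  have gen : forall v w, w < v <= n -> x v != x w -> u i <= ndist (x v) (x w).
    move=> v w Hvw Hne.
    have Dv := divn_eq (v * a) b. have Dw := divn_eq (w * a) b.
    have Mv := ltn_pmod (v * a) (ltn_trans a0 ab).
    have Mw := ltn_pmod (w * a) (ltn_trans a0 ab).
    move: Dv Dw Mv Mw Hne; set qv := v * a %/ b; set qw := w * a %/ b;
      set xv := v * a %% b; set xw := w * a %% b => Dv Dw Mv Mw Hne.
    have Hne' : xv <> xw by apply/eqP.
    have Hxy : ((Z.of_nat v - Z.of_nat w) * Z.of_nat a - (Z.of_nat qv - Z.of_nat qw) * Z.of_nat b
       = Z.of_nat xv - Z.of_nat xw)%Z by lia.
    have := BA (Z.of_nat a) (Z.of_nat b) (Z.of_nat (C i)) (Z.of_nat (C i.+1))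
       (Z.of_nat (E i)) (Z.of_nat (E i.+1)) (Z.of_nat (u i)) (Z.of_nat (u i.+1))
       (Z.of_nat v - Z.of_nat w) (Z.of_nat qv - Z.of_nat qw).
    rewrite Hxy.
    have Hfin : (Z.of_nat (u i) <= Z.of_nat xv - Z.of_nat xw \/ Z.of_nat (u i) <= - (Z.of_nat xv - Z.of_nat xw))%Z -> u i <= ndist xv xw.
      clear -Dv; rewrite /ndist; lia.
    case Ho: (odd i) K1 K2 Hdet Hn2 => /= K1 K2 Hdet Hn2.
    * move=> H; have {}H := H ltac:(clear -K1 K2; lia) ltac:(clear; lia) ltac:(clear; lia) ltac:(clear -Hdet; lia) ltac:(clear -HC; lia) ltac:(clear -HC1; lia) ltac:(clear -Hvw Hn2; lia).
      apply: Hfin.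
      have Hex : ~ ((Z.of_nat v - Z.of_nat w)%Z = Z.of_nat (C i.+1) /\
          (Z.of_nat qv - Z.of_nat qw)%Z = Z.of_nat (E i.+1)).
      move=> [H1 H2].
      have Hw : w = 0 by lia.
      have Hv : v = C i.+1 by lia.
      move: Dw Dv Hne' H2; rewrite /qw /xw Hw mul0n div0n mod0n => Dw Dv Hne' H2.
      have Hq : qv = E i.+1 by lia.
      move: Dv; rewrite Hq Hv K2 => Dv. clear -Dv Hne' Hu1. lia.
      have := H Hex. clear -Hxy. lia.
    * move=> H; have {}H := H ltac:(clear -K1 K2; lia) ltac:(clear; lia) ltac:(clear; lia) ltac:(clear -Hdet; lia) ltac:(clear -HC; lia) ltac:(clear -HC1; lia) ltac:(clear -Hvw Hn2; lia).
      apply: Hfin.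
      have Hex : ~ ((Z.of_nat v - Z.of_nat w)%Z = Z.of_nat (C i.+1) /\
          (Z.of_nat qv - Z.of_nat qw)%Z = Z.of_nat (E i.+1)).
        move=> [H1 H2]. clear -H1 Hvw Hn2. lia.
      have := H Hex. clear -Hxy. lia.
  move=> y z; rewrite !mem_Sset => /existsP [v /eqP ->] /existsP [w /eqP ->] Hne.
  have Hv := ltn_ord v. have Hw := ltn_ord w.
  case: (ltngtP w v) => Hc.
  + apply: gen => //; [lia | by rewrite eq_sym].
  + rewrite /ndist addnC. apply: gen => //; lia.
  + move: Hne; by rewrite Hc eqxx.
Qed.

End Main.
Lemma last_max a b L : 0 < a -> a < b -> L <= 1 ->
  \max_(1 <= n < b | L <= mindist (Sset a b n)) n = b - 1.
Proof.
move=> a0 ab HL. apply: max_eq; first by lia.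
move=> n Hn. have -> : n <= b - 1 by lia.
apply: (leq_trans HL).
apply: (@mindist_ge _ _ 0 a).
- rewrite mem_Sset; apply/existsP; exists (Ordinal (n:=n.+1) (m:=0) ltac:(lia)).
  by rewrite /= mul0n mod0n.
- rewrite mem_Sset; apply/existsP; exists (Ordinal (n:=n.+1) (m:=1) ltac:(lia)).
  by rewrite /= mul1n modn_small.
- apply/eqP; lia.
- move=> x y _ _ Hne. move/eqP: Hne. rewrite /ndist. lia.
Qed.

Lemma Sset_mod g1 g2 n : Sset g2 g1 n = Sset (g2 %% g1) g1 n.
Proof. apply: eq_map => t. by rewrite modnMmr. Qed.

Lemma odd_pred2 p : 0 < p -> odd (2 * p).-1.
Proof. case: p => // p _. by rewrite mulnS /= oddM. Qed.

Ltac gdiv := repeat match goal with |- context [?x %/ ?y] => let q := fresh "q" in move: (x %/ y) => q end.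

Theorem lemma6 (g1 g2 K : nat) :
  coprime g1 g2 -> 1 < g1 -> g1 < g2 ->
  1 < sigma g1 g2 K -> sigma g1 g2 K.+1 = 1 ->
  (K = 0 -> ndd2 g1 g2 1 = g1 - 1 /\ ndd1 g1 g2 1 = g2 - 1) /\
  (1 <= K ->
     ndd2 g1 g2 K.+1 = g1 - 1 /\
         ndd1 g1 g2 K.+1 = g2 - 1 /\
         ndd2 g1 g2 1 = g1 %/ sigma g1 g2 1 /\
         ndd1 g1 g2 1 = (g2 %/ g1) * (g1 %/ sigma g1 g2 1) /\
         (2 <= K ->
            ndd2 g1 g2 2 = (g1 %/ sigma g1 g2 1) * (sigma g1 g2 1 %/ sigma g1 g2 2)
            /\ ndd1 g1 g2 2 = (g2 %/ g1) * (g1 %/ sigma g1 g2 1)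
                                * (sigma g1 g2 1 %/ sigma g1 g2 2)
                              + (sigma g1 g2 1 %/ sigma g1 g2 2) + (g2 %/ g1)) /\
         (forall p, 1 <= p -> (2 * p).+1 <= K ->
            ndd2 g1 g2 (2 * p).+1
              = (sigma g1 g2 (2 * p) %/ sigma g1 g2 (2 * p).+1)
                  * (ndd2 g1 g2 (2 * p) + 1) + ndd2 g1 g2 (2 * p).-1
            /\ ndd1 g1 g2 (2 * p).+1
              = (sigma g1 g2 (2 * p) %/ sigma g1 g2 (2 * p).+1)
                  * ndd1 g1 g2 (2 * p) + ndd1 g1 g2 (2 * p).-1) /\
         (forall p, 1 <= p -> (2 * p).+2 <= K ->
            ndd2 g1 g2 (2 * p).+2
              = (sigma g1 g2 (2 * p).+1 %/ sigma g1 g2 (2 * p).+2)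
                  * ndd2 g1 g2 (2 * p).+1 + ndd2 g1 g2 (2 * p)
            /\ ndd1 g1 g2 (2 * p).+2
              = (sigma g1 g2 (2 * p).+1 %/ sigma g1 g2 (2 * p).+2)
                  * (ndd1 g1 g2 (2 * p).+1 + 1) + ndd1 g1 g2 (2 * p))).
Proof.
move=> cop g1gt1 g12 HK HK1.
have g10 : 0 < g1 by lia.
set s1 := g2 %% g1.
have s1lt : s1 < g1 by rewrite /s1 ltn_mod.
have s1pos : 0 < s1.
  rewrite lt0n; apply/negP => /eqP H.
  move: cop; rewrite /coprime -gcdn_modr -/s1 H gcdn0; lia.
have cop' : coprime s1 g1 by rewrite /coprime gcdnC /s1 gcdn_modr.
have L1 : forall j, sigma g1 g2 j <= 1 -> ndd1 g1 g2 j = g2 - 1.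
  move=> j Hj. rewrite /ndd1 /d1. by apply: last_max => //; lia.
have L2 : forall j, sigma g1 g2 j <= 1 -> ndd2 g1 g2 j = g1 - 1.
  move=> j Hj. rewrite /ndd2 /d2. under eq_bigl do rewrite Sset_mod -/s1.
  by apply: last_max.
have sgt : forall j, j <= K -> 1 < sigma g1 g2 j.
  move=> j Hj. rewrite sigma_u. apply: (@ugt1 g1 g2 g10 g12 cop j.+1 K.+1) => //.
  by rewrite -sigma_u.
have M1 : forall j, j <= K -> ndd1 g1 g2 j = C g1 g2 j.+2 - odd j.
  move=> j Hj. rewrite /ndd1 /d1 sigma_u main //; last by rewrite -sigma_u sgt.
  by rewrite /= negbK.
have M2 : forall j, 0 < j -> j <= K -> ndd2 g1 g2 j = C s1 g1 j.+1 - ~~ odd j.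
  move=> j Hj0 Hj. rewrite /ndd2 /d2. under eq_bigl do rewrite Sset_mod -/s1.
  rewrite -u_shift main //. by rewrite u_shift sgt.
have Q1 : forall i, Q g1 g2 i.+1 = sigma g1 g2 i %/ sigma g1 g2 i.+1.
  by move=> i; rewrite /Q !sigma_u.
have Q0 : Q g1 g2 0 = g2 %/ g1 by [].
have Q' : forall i, Q s1 g1 i = sigma g1 g2 i %/ sigma g1 g2 i.+1.
  by move=> i; rewrite /Q !u_shift.
have Cp : forall i, 0 < i -> 0 < C g1 g2 i by move=> i; apply: Cpos.
have Cp' : forall i, 0 < i -> 0 < C s1 g1 i by move=> i; apply: Cpos.
have sig0 : sigma g1 g2 0 = g1 by [].
split.
  move=> K0; subst K. split; [apply: L2 | apply: L1]; by rewrite HK1.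
move=> K1. split; first by apply: L2; rewrite HK1.
split; first by apply: L1; rewrite HK1.
split.
  rewrite M2 // /= CSS C0 C1 Q' sig0. gdiv. lia.
split.
  rewrite M1 // /= CSS CSS C0 C1 Q1 Q0 sig0. gdiv. lia.
split.
  move=> K2. rewrite M2 // M1 // /= !CSS !C0 !C1 !Q' !Q1 Q0 sig0. gdiv. split; nia.
split.
- move=> p p1 Hp.
  have Ho1 : odd (2 * p) = false by rewrite oddM.
  have Ho2 := odd_pred2 p p1.
  have Hpp : ((2 * p).-1).+1 = 2 * p by clear -p1; lia.
  have Hpp2 : ((2 * p).-1).+2 = (2 * p).+1 by clear -p1; lia.
  rewrite (M2 (2*p).+1 isT ltac:(clear -Hp; lia)) (M2 (2*p) ltac:(clear -p1; lia) ltac:(clear -Hp; lia)).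
  rewrite (M2 (2*p).-1 ltac:(clear -p1; lia) ltac:(clear -Hp; lia)).
  rewrite (M1 (2*p).+1 ltac:(clear -Hp; lia)) (M1 (2*p) ltac:(clear -Hp; lia)).
  rewrite (M1 (2*p).-1 ltac:(clear -Hp; lia)).
  rewrite !oddS Ho1 Ho2 Hpp (CSS s1 g1 (2*p)) (CSS g1 g2 (2*p).+1) Q1 -Q' /=.
  have H1 := Cp (2 * p).+1 isT. have H2 := Cp' (2 * p).+1 isT.
  rewrite subnK // !subn0. split; lia.
- move=> p p1 Hp.
  have Ho1 : odd (2 * p) = false by rewrite oddM.
  rewrite (M2 (2*p).+2 isT ltac:(clear -Hp; lia)) (M2 (2*p).+1 isT ltac:(clear -Hp; lia)).
  rewrite (M2 (2*p) ltac:(clear -p1; lia) ltac:(clear -Hp; lia)).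
  rewrite (M1 (2*p).+2 ltac:(clear -Hp; lia)) (M1 (2*p).+1 ltac:(clear -Hp; lia)).
  rewrite (M1 (2*p) ltac:(clear -Hp; lia)).
  rewrite !oddS Ho1 (CSS s1 g1 (2*p).+1) (CSS g1 g2 (2*p).+2) Q1 -Q' /=.
  have H1 := Cp (2 * p).+3 isT. have H2 := Cp' (2 * p).+1 isT.
  rewrite subnK // !subn0. split; lia.
Qed.
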